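(* Let $\mathcal{A}$ be a finite alphabet, let $X$ be the set of finite sequences (words) over $\mathcal{A}$, and let $\alpha,\beta,\gamma\in\mathbb{R}$. Let $s:X\times X\to\mathbb{R}$ be the scoring function with letter scores $\alpha$ (match), $\beta$ (mismatch), $\gamma$ (insertion/deletion) described in the context. If $\alpha<\min\{\beta,\gamma,0\}$, $\beta\le 2\gamma$ and $\gamma>0$, then $s$ is a strong partial metric on $X$, i.e. for all $x,y,z\in X$: (i) $s(x,x)<s(x,y)$ whenever $x\neq y$; (ii) $s(x,y)=s(y,x)$; (iii) $s(x,y)\le s(x,z)+s(z,y)-s(z,z)$.
   Context: Adjoin a gap symbol $-\notin\mathcal{A}$ and set $\mathcal{A}^\star=\mathcal{A}\cup\{-\}$. An alignment $\mathcal{L}$ of two words $x,y\in X$ is obtained by inserting gap symbols into $x$ and $y$ so that both become sequences $\langle x_i\rangle_{i=1}^m$, $\langle y_i\rangle_{i=1}^m$ over $\mathcal{A}^\star$ of the same length $m$ (deleting the gaps recovers $x$ and $y$). Each position $i$ receives a score $h_{(\mathcal{L},i)}(x,y)$: $\gamma$ if exactly one of $x_i,y_i$ is $-$ (deletion or insertion); $\alpha$ if $x_i=y_i\in\mathcal{A}$ (match); $\beta$ if $x_i,y_i\in\mathcal{A}$ and $x_i\neq y_i$ (mismatch); $0$ if $x_i=y_i=-$ (relay). The score of the alignment is $h_\mathcal{L}(x,y)=\sum_{i=1}^m h_{(\mathcal{L},i)}(x,y)$, and the scoring function is $s(x,y)=\min\{h_\mathcal{L}(x,y)\mid \mathcal{L}\text{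 an alignment of }x\text{ and }y\}$. *)

(* Defs.v *)
From HB Require Import structures.
From mathcomp Require Import all_boot all_order all_algebra.
From mathcomp Require Import all_classical all_reals.
Set Implicit Arguments. Unset Strict Implicit. Unset Printing Implicit Defensive.
Import Order.TTheory GRing.Theory Num.Theory.
Local Open Scope ring_scope.
Local Open Scope classical_set_scope.

(* Words over the alphabet A are [seq A].  The gap symbol is modelled by
   [None] in [option A] (so A* = option A, gap = None). *)

Definition alignment (A : eqType) := seq (option A * option A).

Definition is_alignment (A : eqType) (L : alignment A) (x y : seq A) : Prop :=
  pmap id (map fst L) = x /\ pmap id (map snd L) = y.

Definition col_score (R : numDomainType) (A : eqType) (al be ga : R)
  (c : option A * option A) : R :=
  match c with
  | (None, None) => 0                              (* relay *)
  | (Some _, None) | (None, Some _) => ga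
  | (Some a, Some b) => if a == b then al else be
  end.

Definition align_score (R : numDomainType) (A : eqType) (al be ga : R)
  (L : alignment A) : R :=
  \sum_(c <- L) col_score al be ga c.

(* s(x,y) = min { h_L(x,y) | L an alignment of x and y } (taken as the
   infimum of this set, which is the minimum whenever it is attained) *)
Definition align_dist (R : realType) (A : eqType) (al be ga : R)
  (x y : seq A) : R :=
  inf [set align_score al be ga L | L in [set L : alignment A | is_alignment L x y]].

Definition strong_partial_metric (R : numDomainType) (X : eqType)
  (s : X -> X -> R) : Prop :=
  (forall x y, x != y -> s x x < s x y) /\
  (forall x y, s x y = s y x) /\
  (forall x y z, s x y <= s x z + s z y - s z z).

(* Main.v *)
Require Import Defs.
From HB Require Import structures.
From mathcomp Require Import all_boot all_order all_algebra.
From mathcomp Require Import all_classical all_reals.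
From mathcomp Require Import lra.
Import Order.TTheory GRing.Theory Num.Theory.
Local Open Scope ring_scope.
Local Open Scope classical_set_scope.

Section S.
Variables (R : realType) (A : finType) (al be ga : R).
Hypotheses (hb : al < be) (hg : al < ga) (h0 : al < 0) (hg0 : 0 < ga).

Definition fs (L : alignment A) := pmap id (map fst L).
Definition sn (L : alignment A) := pmap id (map snd L).
Local Notation col := (@col_score R A al be ga).
Local Notation sc := (@align_score R A al be ga).

Lemma sc_cons c L : sc (c :: L) = col c + sc L.
Proof. by rewrite /align_score big_cons. Qed.
Lemma fs_S a c L : fs ((Some a, c) :: L) = a :: fs L. Proof. by []. Qed.
Lemma fs_N c L : fs ((None, c) :: L) = fs L. Proof. by []. Qed.
Lemma sn_S a c L : sn ((c, Some a) :: L) = a :: sn L. Proof. by []. Qed.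
Lemma sn_N c L : sn ((c, None) :: L) = sn L. Proof. by []. Qed.
Lemma sc_nil : sc [::] = 0.
Proof. by rewrite /align_score big_nil. Qed.

Fixpoint dp (x y : seq A) : R :=
 match x with
 | [::] => ga *+ size y
 | a :: x' => let fix dpi y := match y with
     | [::] => ga + dp x' [::]
     | b :: y' => Num.min (Num.min ((if a == b then al else be) + dp x' y')
                     (ga + dp x' (b :: y'))) (ga + dpi y')
     end in dpi y
 end.

Lemma min3 (p q r : R) : Num.min (Num.min p q) r = p \/ Num.min (Num.min p q) r = q
  \/ Num.min (Num.min p q) r = r.
Proof. rewrite /Order.min; case: (p < q); case: (_ < r); auto. Qed.

Lemma dp_l a x y : dp (a :: x) y <= ga + dp x y.
Proof.
case: y => [|b y] //=; rewrite ge_min; apply/orP; left; rewrite ge_min le_refl; apply/orP; by right.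
Qed.

Lemma dp_r b x y : dp x (b :: y) <= ga + dp x y.
Proof.
case: x => [|a x] /=; first by rewrite mulrS.
by rewrite ge_min le_refl orbT.
Qed.

Lemma dp_lr a b x y : dp (a :: x) (b :: y) <= col (Some a, Some b) + dp x y.
Proof. by rewrite /= !ge_min le_refl. Qed.

Lemma dp_lb L : dp (fs L) (sn L) <= sc L.
Proof.
elim: L => [|[[a|] [b|]] L IH]; rewrite ?sc_nil ?sc_cons //=.
- apply: le_trans (dp_lr _ _ _ _) _; by rewrite lerD2l.
- apply: le_trans (dp_l _ _ _) _; by rewrite lerD2l.
- apply: le_trans (dp_r _ _ _) _; by rewrite lerD2l.
- by rewrite add0r.
Qed.

Lemma dp_att x y : exists L, [/\ fs L = x, sn L = y & sc L = dp x y].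
Proof.
elim: x y => [|a x IH] y.
  exists [seq (None, Some b) | b <- y]; split => //.
  - by elim: y => //.
  - by rewrite /sn; elim: y => //= b y ->.
  - elim: y => [|b y IHy]; first by rewrite sc_nil.
    by rewrite /= sc_cons IHy mulrS.
elim: y => [|b y IHy].
  have [L [h1 h2 h3]] := IH [::].
  exists ((Some a, None) :: L); split; rewrite ?sc_cons ?fs_S ?fs_N ?sn_S ?sn_N /= ?h1 ?h2 ?h3 //.
have [L1 [h11 h12 h13]] := IH y.
have [L2 [h21 h22 h23]] := IH (b :: y).
have [L3 [h31 h32 h33]] := IHy.
have E : dp (a :: x) (b :: y) = Num.min (Num.min ((if a == b then al else be) + dp x y)
   (ga + dp x (b :: y))) (ga + dp (a :: x) y) by [].
rewrite E.
have := min3 ((if a == b then al else be) + dp x y) (ga + dp x (b :: y)) (ga + dp (a :: x) y).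
move=> [e|[e|e]].
- exists ((Some a, Some b) :: L1); rewrite e; split; rewrite ?sc_cons ?fs_S ?fs_N ?sn_S ?sn_N ?h11 ?h12 ?h13 //.
- exists ((Some a, None) :: L2); rewrite e; split; rewrite ?sc_cons ?fs_S ?fs_N ?sn_S ?sn_N ?h21 ?h22 ?h23 //.
- exists ((None, Some b) :: L3); rewrite e; split; rewrite ?sc_cons ?fs_S ?fs_N ?sn_S ?sn_N ?h31 ?h32 ?h33 //.
Qed.


Lemma dist_dp x y : @align_dist R A al be ga x y = dp x y.
Proof.
have [L0 [h1 h2 h3]] := dp_att x y.
have inS : [set sc L | L in [set L : alignment A | is_alignment L x y]] (dp x y).
  by exists L0 => //; split.
have lb : lbound [set sc L | L in [set L : alignment A | is_alignment L x y]] (dp x y).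
  move=> r [L [e1 e2] <-]; rewrite -e1 -e2; exact: dp_lb.
apply/le_anti/andP; split.
- by apply: ge_inf => //; exists (dp x y).
- by apply: lb_le_inf => //; exists (dp x y).
Qed.

Lemma dist_lb L : @align_dist R A al be ga (fs L) (sn L) <= sc L.
Proof. rewrite dist_dp; exact: dp_lb. Qed.

Lemma dist_att x y : exists L, [/\ fs L = x, sn L = y & sc L = @align_dist R A al be ga x y].
Proof. rewrite dist_dp; exact: dp_att. Qed.

Lemma diag_lb L : al *+ size (fs L) <= sc L /\ (fs L != sn L -> al *+ size (fs L) < sc L).
Proof.
elim: L => [|[[a|] [b|]] L [IH1 IH2]]; rewrite ?sc_nil ?sc_cons ?fs_S ?fs_N ?sn_S ?sn_N //=.
- rewrite mulrS; case: eqP => [<-|nab].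
    split; first by rewrite lerD2l.
    rewrite eqseq_cons eqxx /= => /IH2; by rewrite ltrD2l.
  split; first by apply: lerD => //; apply: ltW.
  by move=> _; apply: ltr_leD.
- rewrite mulrS; split; first by apply: lerD => //; apply: ltW.
  by move=> _; apply: ltr_leD.
- split; first by rewrite -[al *+ _]add0r; apply: lerD => //; apply: ltW.
  by move=> _; rewrite -[al *+ _]add0r; apply: ltr_leD.
- by rewrite add0r.
Qed.

Lemma diag_dist x : @align_dist R A al be ga x x = al *+ size x.
Proof.
apply/le_anti/andP; split.
- have := dist_lb [seq (Some a, Some a) | a <- x].
  have -> : fs [seq (Some a, Some a) | a <- x] = x by rewrite /fs /sn; elim: x => //= a x ->.
  have -> : sn [seq (Some a, Some a) | a <- x] = x by rewrite /fs /sn; elim: x => //= a x ->.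
  move/le_trans; apply; elim: x => [|a x IH]; first by rewrite sc_nil.
  by rewrite /= sc_cons /= eqxx mulrS lerD2l.
- have [L [h1 h2 <-]] := dist_att x x.
  by have [] := diag_lb L; rewrite h1.
Qed.

Lemma col_tri a b c : col (a, b) + al <= col (a, Some c) + col (Some c, b).
Proof.
have hge : forall a' b', al <= col (Some a', Some b').
  by move=> a' b' /=; case: eqP => _ //; apply: ltW.
case: a b => [a|] [b|] /=.
- case: (a =P b) => [<-|nab].
    by apply: lerD; [apply: (hge a c)|apply: (hge c a)].
  have [ac|nac] := eqVneq a c.
    subst c; have -> : (a == b) = false by apply/eqP.
    by rewrite addrC.
  have [cb|ncb] := eqVneq c b.
    by subst c; rewrite addrC.
  by rewrite lerD2l; apply: ltW.
- by rewrite addrC lerD2r; apply: (hge a c).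
- by rewrite lerD2l; apply: (hge c b).
- by rewrite add0r; apply: ltW; apply: lt_le_trans hg _; rewrite lerDl ltW.
Qed.

Lemma compose L1 L2 : sn L1 = fs L2 -> exists L,
  [/\ fs L = fs L1, sn L = sn L2 & sc L + al *+ size (sn L1) <= sc L1 + sc L2].
Proof.
elim: L1 L2 => [|[a [c|]] L1 IH] L2.
- move=> e; exists L2; split => //; by rewrite sc_nil add0r /= addr0.
- rewrite sn_S.
  elim: L2 => [|[[c'|] b] L2 IHL2] //.
  + rewrite fs_S => -[ecc e]; subst c'; clear IHL2; have [L [h1 h2 h3]] := IH _ e.
    exists ((a, b) :: L).
    rewrite !sc_cons; split.
    * by case: a => [a|]; rewrite ?fs_S ?fs_N h1.
    * by case: b => [b|]; rewrite ?sn_S ?sn_N h2.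
    * rewrite [size _]/= mulrS; have := col_tri a b c.
      move: h3; set u := col _; set v := col _; set w := col _; set n := al *+ _; lra.
  + rewrite fs_N => e; have [L [h1 h2 h3]] := IHL2 e.
    exists ((None, b) :: L); rewrite !sc_cons; split => //.
    * by case: b => [b|]; rewrite ?sn_S ?sn_N h2.
    * move: h3; rewrite sc_cons; set u := col _; set n := al *+ _; lra.
- rewrite sn_N => e; have [L [h1 h2 h3]] := IH _ e.
  exists ((a, None) :: L); rewrite !sc_cons; split => //.
  * by case: a => [a|]; rewrite ?fs_S ?fs_N h1.
  * move: h3; set u := col _; set n := al *+ _; lra.
Qed.

End S.

Lemma col_swap (R : realType) (A : finType) (al be ga : R) (c : option A * option A) :
  col_score al be ga (c.2, c.1) = col_score al be ga c.
Proof. by case: c => [[a|] [b|]] //=; rewrite eq_sym. Qed.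

Theorem lemma2p2 (R : realType) (A : finType) (al be ga : R) :
  al < Num.min be (Num.min ga 0) -> be <= 2 * ga -> 0 < ga ->
  strong_partial_metric (@align_dist R A al be ga).
Proof.
rewrite !lt_min => /and3P[hb hg h0] _ hg0.
split; [|split].
- move=> x y nxy; rewrite (@diag_dist R A al be ga) //.
  have [L [h1 h2 <-]] := @dist_att R A al be ga x y.
  by have [] := @diag_lb R A al be ga hb hg hg0 L => _; rewrite h1 h2; apply.
- move=> x y; apply/le_anti/andP; split.
  + have [L [h1 h2 <-]] := @dist_att R A al be ga y x.
    have := @dist_lb R A al be ga [seq (c.2, c.1) | c <- L].
    have -> : fs _ [seq (c.2, c.1) | c <- L] = sn _ L by rewrite /fs /sn; elim: L {h1 h2} => //= c L ->.
    have -> : sn _ [seq (c.2, c.1) | c <- L] = fs _ L by rewrite /fs /sn; elim: L {h1 h2} => //= c L ->.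
    rewrite h1 h2 => /le_trans; apply.
    elim: L {h1 h2} => [|c L IH]; rewrite ?sc_nil // map_cons !sc_cons col_swap lerD2l //.
  + have [L [h1 h2 <-]] := @dist_att R A al be ga x y.
    have := @dist_lb R A al be ga [seq (c.2, c.1) | c <- L].
    have -> : fs _ [seq (c.2, c.1) | c <- L] = sn _ L by rewrite /fs /sn; elim: L {h1 h2} => //= c L ->.
    have -> : sn _ [seq (c.2, c.1) | c <- L] = fs _ L by rewrite /fs /sn; elim: L {h1 h2} => //= c L ->.
    rewrite h1 h2 => /le_trans; apply.
    elim: L {h1 h2} => [|c L IH]; rewrite ?sc_nil // map_cons !sc_cons col_swap lerD2l //.
- move=> x y z.
  have [L1 [h11 h12 <-]] := @dist_att R A al be ga x z.
  have [L2 [h21 h22 <-]] := @dist_att R A al be ga z y.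
  have [L [e1 e2 e3]] := @compose R A al be ga hb hg hg0 _ _ (etrans h12 (esym h21)).
  rewrite (@diag_dist R A al be ga) //.
  rewrite -h11 -h22 -e1 -e2 -h12.
  apply: le_trans (@dist_lb R A al be ga L) _.
  rewrite lerBrDr; exact: e3.
Qed.
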